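(* Assume $p\neq 0.5$ and $e_{-1}+e_{+1}<1$. Let $\mathcal F$ be a class of measurable classifiers $f:\mathcal X\to\{-1,+1\}$ such that $\min_{f\in\mathcal F}R_{\mathcal D}(f)$ is attained, and let $\tilde f^*\in\arg\min_{f\in\mathcal F}\mathbb E_{\tilde{\mathcal D}}[\mathbb 1_{\mathrm{peer}}(f(X),\tilde Y)]$. Then $$\bigl|R_{\mathcal D}(\tilde f^* )-\min_{f\in\mathcal F}R_{\mathcal D}(f)\bigr|\le|\delta_p|,\qquad \delta_p:=\mathbb P(Y=+1)-\mathbb P(Y=-1),$$ where $R_{\mathcal D}(f)=\mathbb P_{(X,Y)\sim\mathcal D}(f(X)\neq Y)$.
   Context: Let $\mathcal X\subseteq\mathbb R^d$ and let $(X,Y)$ be a random pair with distribution $\mathcal D$ on $\mathcal X\times\{-1,+1\}$, with $p:=\mathbb P(Y=+1)\in(0,1)$. A noisy label $\tilde Y\in\{-1,+1\}$ is generated with noise rates $e_{+1}:=\mathbb P(\tilde Y=-1\mid Y=+1)$, $e_{-1}:=\mathbb P(\tilde Y=+1\mid Y=-1)$, where $\tilde Y$ is conditionally independent of $X$ given $Y$; $\tilde{\mathcal D}$ is the distribution of $(X,\tilde Y)$. The 0-1 loss is $\mathbb 1(a,b)=1$ if $a\neq b$ and $0$ otherwise. The expected 0-1 peer loss of $f$ on $\tilde{\mathcal D}$ is $$\mathbb E_{\tilde{\mathcal D}}[\mathbb 1_{\mathrm{peer}}(f(X),\tilde Y)]:=\mathbb E[\mathbb 1(f(X),\tilde Y)]-\mathbb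 E[\mathbb 1(f(X_1),\tilde Y_2)],$$ where $(X,\tilde Y),(X_1,\tilde Y_1),(X_2,\tilde Y_2)$ are i.i.d. draws from $\tilde{\mathcal D}$. *)

(* Defs.v *)
From HB Require Import structures.
From mathcomp Require Import all_boot all_order all_algebra.
From mathcomp Require Import all_classical all_reals all_analysis.
Set Implicit Arguments. Unset Strict Implicit. Unset Printing Implicit Defensive.
Import Order.TTheory GRing.Theory Num.Theory.
Local Open Scope classical_set_scope.
Local Open Scope ring_scope.

(* Labels: true = +1, false = -1.  The clean distribution D is a probability
   measure P on X * bool (the pair (X, Y)). *)
Section Noisy.
Context (R : realType) (d : measure_display) (X : measurableType d).
Variable P : probability (X * bool)%type R.

(* P(Ytilde = yt | Y = y), with ep = e_{+1}, em = e_{-1} *)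
Definition noise_prob (ep em : R) (y yt : bool) : R :=
  if y then (if yt then 1 - ep else ep) else (if yt then em else 1 - em).

(* The noisy distribution D~ of (X, Ytilde): Ytilde is drawn given Y only,
   independently of X:
   D~(A) = sum_{y, yt} P(Ytilde = yt | Y = y) * P((X, yt) \in A, Y = y). *)
Definition noisyD (ep em : R) (A : set (X * bool)%type) : R :=
  \sum_(y : bool) \sum_(yt : bool)
     noise_prob ep em y yt * fine (P [set z | z.2 = y /\ A (z.1, yt)]).

Definition risk (f : X -> bool) : R := fine (P [set z | f z.1 != z.2]).

(* E_{D~}[1_peer(f(X), Ytilde)] = P~(f(X) <> Ytilde) - P(f(X1) <> Ytilde2),
   with (X1,Yt1), (X2,Yt2) independent draws from D~, so that
   P(f(X1) <> Yt2) = sum_yt D~(f(X) <> yt) * D~(Ytilde = yt). *)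
Definition peer_risk (ep em : R) (f : X -> bool) : R :=
  noisyD ep em [set z | f z.1 != z.2]
  - \sum_(yt : bool) noisyD ep em [set z | f z.1 != yt]
                     * noisyD ep em [set z | z.2 = yt].
End Noisy.

(* Main.v *)
Require Import Defs.
From HB Require Import structures.
From mathcomp Require Import all_boot all_order all_algebra.
From mathcomp Require Import all_classical all_reals all_analysis.
From mathcomp Require Import ring lra.
Import Order.TTheory GRing.Theory Num.Theory.
Local Open Scope classical_set_scope.
Local Open Scope ring_scope.
Set Implicit Arguments. Unset Strict Implicit.

Definition cc (R : realType) (d : measure_display) (X : measurableType d)
  (P : probability (X * bool)%type R) (f : X -> bool) (y g : bool) : R :=
  fine (P [set z | z.2 = y /\ f z.1 = g]).

Lemma meas_c (R : realType) (d : measure_display) (X : measurableType d)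
  (f : X -> bool) (y g : bool) : measurable_fun setT f ->
  measurable [set z : (X * bool)%type | z.2 = y /\ f z.1 = g].
Proof.
move=> mf.
have -> : [set z : (X * bool)%type | z.2 = y /\ f z.1 = g] = (f @^-1` [set g]) `*` [set y].
  by apply/seteqP; split => -[a b] /=; rewrite /setX /preimage /= => -[].
apply: measurableX; last by [].
by rewrite -[_ @^-1` _]setTI; apply: mf.
Qed.

Lemma finU (R : realType) (d : measure_display) (X : measurableType d)
  (P : probability (X * bool)%type R) (A B : set (X * bool)%type) :
  measurable A -> measurable B -> A `&` B = set0 ->
  fine (P (A `|` B)) = fine (P A) + fine (P B).
Proof.
move=> mA mB AB.
rewrite measureU // fineD //; exact: fin_num_measure.
Qed.

Lemma cc_ge0 (R : realType) (d : measure_display) (X : measurableType d)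
  (P : probability (X * bool)%type R) f y g : 0 <= cc P f y g.
Proof. exact/fine_ge0/measure_ge0. Qed.

Lemma cc_Y (R : realType) (d : measure_display) (X : measurableType d)
  (P : probability (X * bool)%type R) f y : measurable_fun setT f ->
  fine (P [set z | z.2 = y]) = cc P f y true + cc P f y false.
Proof.
move=> mf; rewrite /cc -finU; try exact: meas_c.
  congr (fine (P _)); apply/seteqP; split => -[a b] /=.
    by move=> ->; case: (f a); [left|right].
  by case=> -[].
by apply/seteqP; split => -[a b] //= [[_ ->] [_]].
Qed.

Lemma cc_risk (R : realType) (d : measure_display) (X : measurableType d)
  (P : probability (X * bool)%type R) f : measurable_fun setT f ->
  risk P f = cc P f true false + cc P f false true.
Proof.
move=> mf; rewrite /risk /cc -finU; try exact: meas_c.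
  congr (fine (P _)); apply/seteqP; split => -[a b] /=.
    by case: b; case: (f a) => //= _; first [by left | by right].
  by case=> -[-> ->].
by apply/seteqP; split => -[a b] //= [[-> _] []].
Qed.

Lemma cc_tot (R : realType) (d : measure_display) (X : measurableType d)
  (P : probability (X * bool)%type R) :
  fine (P [set z | z.2 = true]) + fine (P [set z | z.2 = false]) = 1.
Proof.
rewrite -finU //.
  have -> : [set z : (X * bool)%type | z.2 = true] `|` [set z | z.2 = false] = setT.
    by apply/seteqP; split => -[a b] //= _; case: b; [left|right].
  by rewrite probability_setT.
- have -> : [set z : (X * bool)%type | z.2 = true] = setT `*` [set true].
    by apply/seteqP; split => -[a b]; rewrite /setX /=; tauto.
  exact: measurableX.
- have -> : [set z : (X * bool)%type | z.2 = false] = setT `*` [set false].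
    by apply/seteqP; split => -[a b]; rewrite /setX /=; tauto.
  exact: measurableX.
by apply/seteqP; split => -[a b] //= [-> ].
Qed.
Lemma E1 (R : realType) (d : measure_display) (X : measurableType d)
  (P : probability (X * bool)%type R) (f : X -> bool) y b :
  fine (P [set z | z.2 = y /\ f z.1 != b]) = cc P f y (~~ b).
Proof.
rewrite /cc; congr (fine (P _)); apply/seteqP; split => -[a c] /= [-> H]; split => //.
  by move: H; case: (f a); case: b.
by rewrite H; case: (b).
Qed.

Lemma E2 (R : realType) (d : measure_display) (X : measurableType d)
  (P : probability (X * bool)%type R) y (b : bool) :
  fine (P [set z | z.2 = y /\ b = b]) = fine (P [set z | z.2 = y]).
Proof. by congr (fine (P _)); apply/seteqP; split => -[a c] /= => [[]|]. Qed.

Lemma E3 (R : realType) (d : measure_display) (X : measurableType d)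
  (P : probability (X * bool)%type R) y :
  fine (P [set z | z.2 = y /\ true = false]) = 0.
Proof.
have -> : [set z : (X * bool)%type | z.2 = y /\ true = false] = set0.
  by apply/seteqP; split => -[a c] // [].
by rewrite measure0.
Qed.

Lemma E4 (R : realType) (d : measure_display) (X : measurableType d)
  (P : probability (X * bool)%type R) y :
  fine (P [set z | z.2 = y /\ false = true]) = 0.
Proof.
have -> : [set z : (X * bool)%type | z.2 = y /\ false = true] = set0.
  by apply/seteqP; split => -[a c] // [].
by rewrite measure0.
Qed.

Lemma peerE (R : realType) (d : measure_display) (X : measurableType d)
  (P : probability (X * bool)%type R) ep em f : measurable_fun setT f ->
  peer_risk P ep em f = (1 - ep - em) * (2 * (cc P f false true * (cc P f true true + cc P f true false)
     - cc P f true true * (1 - (cc P f true true + cc P f true false)))).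
Proof.
move=> mf; rewrite /peer_risk /noisyD !big_bool /= !E1 !E2 !E3 !E4 /=.
have := cc_tot P; rewrite !(cc_Y P _ mf) => tot.
have -> : cc P f false false = 1 - cc P f true true - cc P f true false - cc P f false true.
  by rewrite -tot; ring.
ring.
Qed.
Unset Implicit Arguments. Set Strict Implicit.
Theorem theorem3 (R : realType) (d : measure_display) (X : measurableType d)
  (P : probability (X * bool)%type R) (ep em : R) (F : set (X -> bool)) :
  0 < fine (P [set z | z.2 = true]) < 1 ->
  fine (P [set z | z.2 = true]) != 2^-1 ->
  0 <= ep <= 1 -> 0 <= em <= 1 ->
  em + ep < 1 ->
  (forall f, F f -> measurable_fun setT f) ->
  (exists f0, F f0 /\ forall f, F f -> risk P f0 <= risk P f) ->
  forall f0, F f0 -> (forall f, F f -> risk P f0 <= risk P f) ->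
  forall ft, F ft -> (forall f, F f -> peer_risk P ep em ft <= peer_risk P ep em f) ->
  `| risk P ft - risk P f0 | <=
    `| fine (P [set z | z.2 = true]) - fine (P [set z | z.2 = false]) |.
Proof.
move=> /andP[p0 p1] _ _ _ kpos mF _ f0 Ff0 minf0 ft Fft minft.
have mf0 := mF _ Ff0; have mft := mF _ Fft.
have Rle := minf0 _ Fft.
have Ple := minft _ Ff0.
have tot := cc_tot P.
have Yf0 := cc_Y P true mf0; have Yft := cc_Y P true mft.
rewrite (peerE _ _ _ mf0) (peerE _ _ _ mft) in Ple.
rewrite (cc_risk P mf0) (cc_risk P mft) in Rle *.
have -> : fine (P [set z | z.2 = false]) = 1 - fine (P [set z | z.2 = true]) by lra.
move: Ple Rle p0 p1 Yf0 Yft.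
set p := fine (P [set z | z.2 = true]).
have := cc_ge0 P ft true true; have := cc_ge0 P f0 true true.
have := cc_ge0 P ft true false; have := cc_ge0 P f0 true false.
set at' := cc P ft true true; set a0 := cc P f0 true true.
set ct := cc P ft true false; set c0 := cc P f0 true false.
set bt := cc P ft false true; set b0 := cc P f0 false true.
move=> hc0 hct ha0 hat Ple Rle p0 p1 Yf0 Yft.
have k0 : 0 < 1 - ep - em by lra.
have Ple' : bt * (at' + ct) - at' * (1 - (at' + ct)) <= b0 * (a0 + c0) - a0 * (1 - (a0 + c0)).
  by move: Ple; rewrite ler_pM2l // ler_pM2l.
rewrite -Yf0 -Yft in Ple'.
have key : p * (ct + bt - (c0 + b0)) <= (2 * p - 1) * (a0 - at').
  have -> : ct = p - at' by lra.
  have -> : c0 = p - a0 by lra.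
  nra.
have ab : `|(2 * p - 1) * (a0 - at')| <= `|2 * p - 1| * p.
  rewrite normrM ler_wpM2l //.
  rewrite ler_norml; apply/andP; split; lra.
have hp : p * (ct + bt - (c0 + b0)) <= p * `|2 * p - 1|.
  apply: (le_trans key); apply: (le_trans (ler_norm _)); by rewrite [p * _]mulrC.
rewrite ler_pM2l // in hp.
rewrite ger0_norm; last by lra.
have -> : p - (1 - p) = 2 * p - 1 by ring.
lra.
Qed.
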